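(* Let $n\ge 2$, $s\in\mathbb{R}$, and let $u\in C^2((0,\infty))$. Then $$u(r)-u(r\tau)+\big(u(r)-u(\tfrac{r}{\tau})\big)\tau^{-n+2s}\le 0\quad\text{for all } r>0,\ \tau\ge1$$ holds if and only if $$u''(r)+(n-2s+1)\frac{u'(r)}{r}\ge 0\quad\text{for all } r>0.$$
   Context: $u$ is viewed as a radial function $x\mapsto u(|x|)$ on $\mathbb{R}^n$. *)

(* Defs.v *)
From Stdlib Require Import Reals.
From Coquelicot Require Import Coquelicot.
Open Scope R_scope.

Definition C2_pos (u : R -> R) : Prop :=
  forall r : R, 0 < r ->
    ex_derive u r /\ ex_derive (Derive u) r /\
    continuous (Derive_n u 2) r.

(* Main.v *)
Require Import Defs.
From Stdlib Require Import Reals Lra.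
From Coquelicot Require Import Coquelicot.
Open Scope R_scope.
Open Scope R_scope.
Lemma cont_of_der (f : R -> R) x : ex_derive f x -> continuity_pt f x.
Proof. intro H. apply continuity_pt_filterlim. exact (ex_derive_continuous f x H). Qed.

Lemma key (u : R -> R) (k r tau : R)
  (hu : forall x, 0 < x -> ex_derive u x /\ ex_derive (Derive u) x)
  (hr : 0 < r) (ht : 1 <= tau) :
  exists c d, 1 <= c <= tau /\ r*c/tau <= d <= r*c /\
  u r - u (r*tau) + (u r - u (r/tau)) * exp((1-k) * ln tau) =
  - (r * exp(-k * ln(r*c)) * (exp(k*ln d) * (Derive (Derive u) d + k*(Derive u d / d)))
       * (r*c - r*c/tau) * (tau-1)).
Proof.
  pose (Tt := exp((1-k) * ln tau)).
  pose (H := fun sg => (u(r*sg) - u r) - Tt*(u(r*sg/tau) - u(r/tau))).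
  pose (dH := fun sg => r * Derive u (r*sg) - Tt * (r/tau) * Derive u (r*sg/tau)).
  assert (hdH : forall sg, 0 < sg -> is_derive H sg (dH sg)).
  { intros sg hsg. unfold H, dH. auto_derive.
    - split; [apply hu; apply Rmult_lt_0_compat; lra|].
      split; [|exact I]. apply hu. unfold Rdiv.
      apply Rmult_lt_0_compat; [apply Rmult_lt_0_compat; lra|apply Rinv_0_lt_compat; lra].
    - change (fun x => u x) with u. unfold Rdiv. ring. }
  destruct (MVT_gen H 1 tau dH) as [c [hc hHc]].
  { intros x hx. apply hdH. unfold Rmin in hx. destruct (Rle_dec 1 tau); lra. }
  { intros x hx. apply cont_of_der. eexists. apply hdH.
    unfold Rmin in hx. destruct (Rle_dec 1 tau); lra. }
  assert (hc' : 1 <= c <= tau).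
  { unfold Rmin, Rmax in hc. destruct (Rle_dec 1 tau); lra. }
  pose (G := fun rh => exp(k * ln rh) * Derive u rh).
  pose (dG := fun rh => exp(k*ln rh) * (Derive (Derive u) rh + k*(Derive u rh / rh))).
  assert (hdG : forall rh, 0 < rh -> is_derive G rh (dG rh)).
  { intros rh hrh. unfold G, dG. auto_derive.
    - split; [exact hrh|]. split; [apply hu; exact hrh|exact I].
    - change (fun x => Derive u x) with (Derive u). unfold Rdiv. ring. }
  assert (hrc : 0 < r*c/tau).
  { unfold Rdiv. apply Rmult_lt_0_compat; [apply Rmult_lt_0_compat; lra|apply Rinv_0_lt_compat; lra]. }
  assert (hle : r*c/tau <= r*c).
  { unfold Rdiv. rewrite <- (Rmult_1_r (r*c)) at 2. apply Rmult_le_compat_l; [nra|].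
    rewrite <- Rinv_1. apply Rinv_le_contravar; lra. }
  destruct (MVT_gen G (r*c/tau) (r*c) dG) as [d [hd hGd]].
  { intros x hx. apply hdG. unfold Rmin in hx. destruct (Rle_dec (r*c/tau) (r*c)); lra. }
  { intros x hx. apply cont_of_der. eexists. apply hdG.
    unfold Rmin in hx. destruct (Rle_dec (r*c/tau) (r*c)); lra. }
  assert (hd' : r*c/tau <= d <= r*c).
  { unfold Rmin, Rmax in hd. destruct (Rle_dec (r*c/tau) (r*c)); lra. }
  exists c, d. split; [exact hc'|]. split; [exact hd'|].
  assert (hid : dH c = r * exp(-k * ln(r*c)) * (G (r*c) - G (r*c/tau))).
  { unfold dH, G, Tt.
    assert (e1 : exp (- k * ln (r * c)) * exp (k * ln (r * c)) = 1).
    { rewrite <- exp_plus. replace (- k * ln (r * c) + k * ln (r * c)) with 0 by ring. apply exp_0. }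
    assert (e2 : exp (- k * ln (r * c)) * exp (k * ln (r * c / tau)) * tau = exp ((1 - k) * ln tau)).
    { rewrite ln_div by nra.
      replace (exp (- k * ln (r * c)) * exp (k * (ln (r * c) - ln tau)) * tau) with
        (exp (- k * ln (r * c)) * exp (k * (ln (r * c) - ln tau)) * exp (ln tau))
        by (rewrite exp_ln; lra).
      rewrite <- !exp_plus. f_equal. ring. }
    assert (ht0 : 0 < tau) by lra.
    replace (r * exp (- k * ln (r * c)) *
      (exp (k * ln (r * c)) * Derive u (r * c) - exp (k * ln (r * c / tau)) * Derive u (r * c / tau)))
      with (r * (exp (- k * ln (r * c)) * exp (k * ln (r * c))) * Derive u (r * c)
            - r * (exp (- k * ln (r * c)) * exp (k * ln (r * c / tau)) * tau) / tau * Derive u (r * c / tau))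
      by (field; lra).
    rewrite e1, e2. field. lra. }
  assert (hH1 : H 1 = 0).
  { unfold H. rewrite Rmult_1_r. ring. }
  assert (hHt : H tau = - (u r - u (r*tau) + (u r - u (r/tau)) * Tt)).
  { unfold H. replace (r*tau/tau) with r by (field; lra). ring. }
  rewrite hH1, Rminus_0_r, hid, hGd in hHc.
  transitivity (- H tau). { rewrite hHt. unfold Tt. ring. }
  rewrite hHc. unfold dG. ring.
Qed.

Theorem theorem1p3 (n : nat) (s : R) (u : R -> R) :
  (2 <= n)%nat -> C2_pos u ->
  ((forall r tau : R, 0 < r -> 1 <= tau ->
      u r - u (r * tau) + (u r - u (r / tau)) * Rpower tau (- INR n + 2 * s) <= 0)
   <->
   (forall r : R, 0 < r ->
      Derive_n u 2 r + (INR n - 2 * s + 1) * (Derive u r / r) >= 0)).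
Proof.
  intros _ hC.
  pose (k := INR n - 2 * s + 1).
  assert (hu : forall x, 0 < x -> ex_derive u x /\ ex_derive (Derive u) x).
  { intros x hx. destruct (hC x hx) as [h1 [h2 _]]. split; assumption. }
  assert (hP : forall tau, Rpower tau (- INR n + 2 * s) = exp ((1 - k) * ln tau)).
  { intros tau. unfold Rpower, k. f_equal. ring. }
  change (Derive_n u 2) with (Derive (Derive u)).
  split.
  - intros hI r0 hr0.
    destruct (Rlt_dec (Derive (Derive u) r0 + (INR n - 2 * s + 1) * (Derive u r0 / r0)) 0)
      as [hneg|hnn]; [|lra].
    exfalso.
    pose (Cf := (Derive (Derive u) + mult_real_fct k (Derive u / id))%F).
    assert (hCf : forall x, Cf x = Derive (Derive u) x + k * (Derive u x / x)).
    { intros x. reflexivity. }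
    assert (hcont : continuity_pt Cf r0).
    { destruct (hC r0 hr0) as [h1 [h2 h3]].
      apply continuity_pt_plus.
      - apply continuity_pt_filterlim. exact h3.
      - apply continuity_pt_scal. apply continuity_pt_div.
        + apply cont_of_der. exact h2.
        + apply derivable_continuous_pt. apply derivable_pt_id.
        + unfold id. lra. }
    destruct (hcont (- Cf r0) ltac:(rewrite hCf; fold k in hneg; lra)) as [alp [halp hal]].
    assert (hneg2 : forall x, Rabs (x - r0) < alp -> Cf x < 0).
    { intros x hx. destruct (Req_dec x r0) as [->|hne].
      - rewrite hCf. fold k in hneg. lra.
      - assert (hh := hal x (conj (conj I (not_eq_sym hne)) hx)).
        simpl in hh. unfold R_dist in hh.
        apply Rabs_def2 in hh. lra. }
    pose (m := Rmin alp r0).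
    assert (hm : 0 < m /\ m <= alp /\ m <= r0).
    { unfold m, Rmin. destruct (Rle_dec alp r0); lra. }
    pose (tau := 1 + m / (2 * r0)).
    assert (htau : r0 * tau = r0 + m / 2).
    { unfold tau. field. lra. }
    assert (htau1 : 1 < tau).
    { unfold tau. assert (0 < m / (2 * r0)) by (apply Rdiv_lt_0_compat; lra). lra. }
    pose (q := r0 / tau).
    assert (hq : q * tau = r0) by (unfold q; field; lra).
    assert (hq0 : 0 < q) by (unfold q; apply Rdiv_lt_0_compat; lra).
    assert (hqlt : q < r0) by nra.
    assert (hq2 : r0 - q <= m / 2).
    { assert (e1 : r0 - q = q * (tau - 1)) by nra.
      assert (e2 : tau - 1 = m / (2 * r0)) by (unfold tau; ring).
      rewrite e2 in e1.
      assert (q * (m / (2 * r0)) <= m / 2).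
      { replace (q * (m / (2 * r0))) with ((q / r0) * (m / 2)) by (field; lra).
        rewrite <- (Rmult_1_l (m / 2)) at 2. apply Rmult_le_compat_r; [lra|].
        apply Rlt_le. apply (Rmult_lt_reg_r r0); [lra|]. unfold Rdiv.
        rewrite Rmult_assoc, Rinv_l by lra. lra. }
      lra. }
    destruct (key u k r0 tau hu hr0 (Rlt_le _ _ htau1)) as [c [d [hc [hd heq]]]].
    assert (hdlow : q <= d).
    { apply Rle_trans with (r0 * c / tau); [|lra].
      unfold q, Rdiv. apply Rmult_le_compat_r; [left; apply Rinv_0_lt_compat; lra|nra]. }
    assert (hdhigh : d <= r0 * tau) by nra.
    assert (hCd : Cf d < 0).
    { apply hneg2. apply Rabs_def1; lra. }
    rewrite hCf in hCd.
    assert (hI' := hI r0 tau hr0 (Rlt_le _ _ htau1)).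
    rewrite hP, heq in hI'.
    assert (hrc : 0 < r0 * c - r0 * c / tau).
    { assert (r0 * c / tau < r0 * c); [|lra].
      apply (Rmult_lt_reg_r tau); [lra|]. unfold Rdiv.
      rewrite Rmult_assoc, Rinv_l by lra. nra. }
    assert (hQ : 0 < r0 * exp (- k * ln (r0 * c)) * exp (k * ln d) * (r0 * c - r0 * c / tau) * (tau - 1)).
    { repeat apply Rmult_lt_0_compat; try lra; apply exp_pos. }
    set (Q := r0 * exp (- k * ln (r0 * c)) * exp (k * ln d) * (r0 * c - r0 * c / tau) * (tau - 1)) in hQ.
    set (Cd := Derive (Derive u) d + k * (Derive u d / d)) in *.
    assert (e : r0 * exp (- k * ln (r0 * c)) * (exp (k * ln d) * Cd) * (r0 * c - r0 * c / tau) * (tau - 1) = Q * Cd)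
      by (unfold Q; ring).
    rewrite e in hI'.
    assert (Q * Cd < 0).
    { replace (Q * Cd) with (- (Q * (- Cd))) by ring.
      assert (0 < Q * (- Cd)) by (apply Rmult_lt_0_compat; lra). lra. }
    lra.
  - intros hI r tau hr ht.
    destruct (key u k r tau hu hr ht) as [c [d [hc [hd heq]]]].
    rewrite hP, heq.
    assert (hd0 : 0 < d).
    { apply Rlt_le_trans with (r * c / tau); [|lra].
      apply Rdiv_lt_0_compat; nra. }
    assert (hCd := hI d hd0). fold k in hCd.
    assert (0 <= r * c - r * c / tau).
    { assert (r * c / tau <= r * c); [|lra].
      apply (Rmult_le_reg_r tau); [lra|]. unfold Rdiv.
      rewrite Rmult_assoc, Rinv_l by lra. nra. }
    assert (hQ : 0 <= r * exp (- k * ln (r * c)) * exp (k * ln d) * (r * c - r * c / tau) * (tau - 1)).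
    { repeat apply Rmult_le_pos; try lra; left; apply exp_pos. }
    set (Q := r * exp (- k * ln (r * c)) * exp (k * ln d) * (r * c - r * c / tau) * (tau - 1)) in hQ.
    set (Cd := Derive (Derive u) d + k * (Derive u d / d)) in *.
    assert (e : r * exp (- k * ln (r * c)) * (exp (k * ln d) * Cd) * (r * c - r * c / tau) * (tau - 1) = Q * Cd)
      by (unfold Q; ring).
    rewrite e.
    assert (0 <= Q * Cd) by (apply Rmult_le_pos; lra).
    lra.
Qed.
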